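(* In the recursion below (with any $\eta>0$, any initial policy $\pi_0$, $Q_1\equiv0$), suppose the bonuses $\mathrm{CB}_k\ge0$ are valid for every $k=1,\dots,K$. Then $$\sum_{k=1}^K\big(\langle\mu^*,r\rangle-\langle\mu^{\pi_k},r\rangle\big)\le 2\sum_{k=1}^K\langle\mu^{\pi_k},\mathrm{CB}_k\rangle+2H+\frac1\eta\mathcal H(\pi^*\|\pi_0)+\frac{\eta H^3K}{2}.$$
   Context: Discounted MDP with finite $\mathcal X$, $\mathcal A$, reward $r:\mathcal X\times\mathcal A\to[0,1]$, transition kernel $P$, discount $\gamma\in(0,1)$, initial distribution $\nu_0$, $H=1/(1-\gamma)$. $(Pf)(x,a)=\sum_{x'}P(x'|x,a)f(x')$. For a policy $\pi$, $\nu^\pi(x)=(1-\gamma)\sum_{t\ge0}\gamma^t\mathbb P_\pi[X_t=x]$ with $X_0\sim\nu_0$, $\mu^\pi(x,a)=\nu^\pi(x)\pi(a|x)$, $\langle\mu,f\rangle=\sum_{x,a}\mu(x,a)f(x,a)$; $\pi^*$ is an optimal policy, $\mu^*=\mu^{\pi^*}$. Conditional relative entropy: $\mathcal H(\pi\|\pi')=\sum_x\nu^\pi(x)\mathrm{KL}(\pi(\cdot|x)\|\pi'(\cdot|x))$. Recursion: $V_k(x)=\frac1\eta\log\sum_a\pi_{k-1}(a|x)e^{\eta Q_k(x,a)}$, $\pi_k(a|x)=\pi_{k-1}(a|x)e^{\eta(Q_k(x,a)-V_k(x))}$, $Q_{k+1}=\Pi_H[r+\mathrm{CB}_k+\gamma\widehat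 P_kV_k]$, where $\widehat P_k$ is any real function on $\mathcal X\times\mathcal A\times\mathcal X$ acting by $(\widehat P_kf)(x,a)=\sum_{x'}\widehat P_k(x'|x,a)f(x')$, and $\Pi_Hf(z)=\max(\min(f(z),H),0)$. Validity for epoch $k$: for all $(x,a)$, $\big|\gamma\sum_{x'}(P(x'|x,a)-\widehat P_k(x'|x,a))V_k(x')\big|\le\mathrm{CB}_k(x,a)$. *)

(* Defs.v *)
From HB Require Import structures.
From mathcomp Require Import all_boot all_order all_algebra.
From mathcomp Require Import all_classical all_reals all_analysis.
Set Implicit Arguments. Unset Strict Implicit. Unset Printing Implicit Defensive.
Import Order.TTheory GRing.Theory Num.Theory numFieldNormedType.Exports.
Local Open Scope ring_scope.

Section MDP.
Variables (R : realType) (X A : finType).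

Definition is_distr (T : finType) (p : T -> R) :=
  (forall t, 0 <= p t) /\ \sum_(t : T) p t = 1.

(* transition kernel P x a x' = P(x' | x, a) *)
Definition is_kernel (P : X -> A -> X -> R) :=
  forall x a, is_distr (P x a).

(* stationary stochastic policy: pi x a = pi(a | x) *)
Definition is_policy (pi : X -> A -> R) := forall x, is_distr (pi x).

(* state distribution at time t under pi, starting from d0:
   state_dist t x = P_pi[X_t = x] *)
Fixpoint state_dist (P : X -> A -> X -> R) (pi : X -> A -> R)
    (d0 : X -> R) (t : nat) : X -> R :=
  match t with
  | 0 => d0
  | t'.+1 => fun x' =>
      \sum_(x : X) \sum_(a : A) state_dist P pi d0 t' x * pi x a * P x a x'
  end.

Definition rseries (u : nat -> R) : R := limn (series u).

Definition occ_state (P : X -> A -> X -> R) (g : R) (nu0 : X -> R)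
    (pi : X -> A -> R) (x : X) : R :=
  (1 - g) * rseries (fun t => g ^+ t * state_dist P pi nu0 t x).

Definition occ (P : X -> A -> X -> R) (g : R) (nu0 : X -> R)
    (pi : X -> A -> R) (x : X) (a : A) : R :=
  occ_state P g nu0 pi x * pi x a.

Definition inner (mu f : X -> A -> R) : R :=
  \sum_(x : X) \sum_(a : A) mu x a * f x a.

Definition dirac_st (x : X) : X -> R := fun y => if y == x then 1 else 0.

Definition value (P : X -> A -> X -> R) (g : R) (r : X -> A -> R)
    (pi : X -> A -> R) (x : X) : R :=
  rseries (fun t => g ^+ t *
     \sum_(y : X) \sum_(a : A) state_dist P pi (dirac_st x) t y * pi y a * r y a).

Definition is_optimal (P : X -> A -> X -> R) (g : R) (r : X -> A -> R)
    (pis : X -> A -> R) :=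
  is_policy pis /\
  forall pi, is_policy pi -> forall x, value P g r pi x <= value P g r pis x.

(* KL(p || q) for distributions on A, in extended reals:
   +oo if p is not absolutely continuous w.r.t. q, with 0 ln 0 = 0 *)
Definition KL (p q : A -> R) : \bar R :=
  if [forall a, (0 < p a) ==> (0 < q a)]
  then (\sum_(a : A | 0 < p a) p a * ln (p a / q a))%:E
  else +oo%E.

(* conditional relative entropy H(pi || pi') = sum_x nu^pi(x) KL(pi(.|x) || pi'(.|x)),
   with the convention 0 * (+oo) = 0 *)
Definition cond_rel_ent (P : X -> A -> X -> R) (g : R) (nu0 : X -> R)
    (pi pi' : X -> A -> R) : \bar R :=
  (\sum_(x : X | (0 < occ_state P g nu0 pi x)%R)
      (occ_state P g nu0 pi x)%:E * KL (pi x) (pi' x))%E.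

Definition clipH (H v : R) : R := Num.max (Num.min v H) 0.

Definition applyP (Ph : X -> A -> X -> R) (f : X -> R) (x : X) (a : A) : R :=
  \sum_(x' : X) Ph x a x' * f x'.

End MDP.

(* Main.v *)
Require Import Defs.
From HB Require Import structures.
From mathcomp Require Import all_boot all_order all_algebra.
From mathcomp Require Import all_classical all_reals all_analysis.
From mathcomp Require Import ring lra.
Import Order.TTheory GRing.Theory Num.Theory numFieldNormedType.Exports.
Local Open Scope ring_scope.

Section AllHelpers.
Local Set Implicit Arguments.
Local Unset Strict Implicit.
Local Open Scope classical_set_scope.

Lemma cvg_sumR (R : realType) (I : finType) (f : I -> nat -> R) (l : I -> R) :
  (forall i, f i @ \oo --> l i) ->
  (fun n => \sum_i f i n) @ \oo --> \sum_i l i.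
Proof.
move=> H; apply: cvg_big => //; first exact: add_continuous.
Qed.
Section Occ.
Variables (R : realType) (X A : finType).
Variables (P : X -> A -> X -> R) (g : R) (nu0 : X -> R) (p : X -> A -> R).
Hypotheses (HP : is_kernel P) (Hg : 0 < g < 1) (Hnu : is_distr nu0) (Hp : is_policy p).

Lemma sd_ge0 t x : 0 <= state_dist P p nu0 t x.
Proof.
elim: t x => [|t IH] x /=; first by case: Hnu.
apply: sumr_ge0 => y _; apply: sumr_ge0 => a _.
apply: mulr_ge0; first apply: mulr_ge0 => //.
  by case: (Hp y).
by case: (HP y a).
Qed.

Lemma sd_sum1 t : \sum_x state_dist P p nu0 t x = 1.
Proof.
elim: t => [|t IH] /=; first by case: Hnu.
transitivity (\sum_x \sum_a state_dist P p nu0 t x * p x a * \sum_y P x a y).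
  rewrite exchange_big; apply: eq_bigr => x _; rewrite exchange_big.
  by apply: eq_bigr => a _; rewrite mulr_sumr.
rewrite -IH; apply: eq_bigr => x _.
under eq_bigr do rewrite (proj2 (HP x _)) mulr1.
by rewrite -mulr_sumr (proj2 (Hp x)) mulr1.
Qed.

Lemma sd_le1 t x : state_dist P p nu0 t x <= 1.
Proof.
rewrite -(sd_sum1 t) (bigD1 x) //= lerDl; apply: sumr_ge0 => y _; exact: sd_ge0.
Qed.

Lemma g_ge0 : 0 <= g. Proof. by case/andP: Hg => /ltW. Qed.
Lemma g_lt1 : g < 1. Proof. by case/andP: Hg. Qed.

Definition uu x := fun t => g ^+ t * state_dist P p nu0 t x.

Lemma uu_ge0 x t : 0 <= uu x t.
Proof. apply: mulr_ge0; [apply: exprn_ge0; exact: g_ge0 | exact: sd_ge0]. Qed.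

Lemma uu_cvg x : cvgn (series (uu x)).
Proof.
apply: (@series_le_cvg _ _ (geometric 1 g)).
- exact: uu_ge0.
- move=> n; apply: geometric_ge0 => //; exact: g_ge0.
- move=> n /=; rewrite mul1r /uu ler_piMr ?sd_le1 //; apply: exprn_ge0; exact: g_ge0.
- apply: is_cvg_geometric_series; rewrite ger0_norm ?g_lt1 ?g_ge0 //.
Qed.

Lemma uu_rec y n : series (uu y) n.+1 =
  nu0 y + g * \sum_x \sum_a p x a * P x a y * series (uu x) n.
Proof.
rewrite !seriesEnat /= big_nat_recl // /uu expr0 mul1r /=; congr (_ + _).
transitivity (\sum_(0 <= i < n) \sum_x \sum_a g ^+ i.+1 * state_dist P p nu0 i x * p x a * P x a y).
  apply: eq_bigr => i _; rewrite mulr_sumr; apply: eq_bigr => x _.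
  rewrite mulr_sumr; apply: eq_bigr => a _; ring.
rewrite exchange_big mulr_sumr; apply: eq_bigr => x _.
rewrite exchange_big mulr_sumr; apply: eq_bigr => a _.
rewrite seriesEnat /= !mulr_sumr; apply: eq_bigr => i _; rewrite /uu exprS; ring.
Qed.

Lemma occ_flow y : occ_state P g nu0 p y =
  (1 - g) * nu0 y + g * \sum_x \sum_a occ_state P g nu0 p x * p x a * P x a y.
Proof.
rewrite /occ_state /rseries.
set L := fun x => limn (series (uu x)).
have -> : limn (series (fun t => g ^+ t * state_dist P p nu0 t y)) = L y by [].
have H1 : (fun n => series (uu y) n.+1) @ \oo --> L y by rewrite cvg_shiftS; exact: uu_cvg.
have H2 : (fun n => nu0 y + g * \sum_x \sum_a p x a * P x a y * series (uu x) n) @ \oo -->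
   nu0 y + g * \sum_x \sum_a p x a * P x a y * L x.
  apply: cvgD; first exact: cvg_cst.
  apply: cvgMl_tmp; apply: cvg_sumR => x; apply: cvg_sumR => a.
  apply: cvgMl_tmp; exact: uu_cvg.
have E : (fun n => series (uu y) n.+1) = (fun n => nu0 y + g * \sum_x \sum_a p x a * P x a y * series (uu x) n).
  by apply/funext => n; rewrite uu_rec.
rewrite E in H1.
have -> : L y = nu0 y + g * \sum_x \sum_a p x a * P x a y * L x.
  have := cvg_unique _ H1 H2. by apply.
rewrite mulrDr; congr (_ + _).
rewrite mulrCA; congr (_ * _); rewrite mulr_sumr; apply: eq_bigr => x _.
rewrite mulr_sumr; apply: eq_bigr => a _; rewrite /L; ring.
Qed.

Lemma occ_ge0 y : 0 <= occ_state P g nu0 p y.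
Proof.
rewrite /occ_state; apply: mulr_ge0; first by rewrite subr_ge0 ltW ?g_lt1.
apply: limr_ge; first exact: uu_cvg.
near=> n; rewrite seriesEnat /=; apply: sumr_ge0 => i _; exact: uu_ge0.
Unshelve. all: by end_near.
Qed.

End Occ.

Section Occ2.
Variables (R : realType) (X A : finType).
Variables (P : X -> A -> X -> R) (g : R) (nu0 : X -> R).
Hypotheses (HP : is_kernel P) (Hg : 0 < g < 1) (Hnu : is_distr nu0).

Lemma occ_sum1 p : is_policy p -> \sum_y occ_state P g nu0 p y = 1.
Proof.
move=> Hp.
set S := \sum_y _.
have E : S = (1 - g) + g * S.
  rewrite {1}/S; under eq_bigr do rewrite occ_flow //.
  rewrite big_split /= -mulr_sumr (proj2 Hnu) mulr1 -mulr_sumr.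
  congr (_ + _ * _).
  rewrite exchange_big; apply: eq_bigr => x _.
  transitivity (\sum_a occ_state P g nu0 p x * p x a * \sum_y P x a y).
    rewrite exchange_big; apply: eq_bigr => a _; by rewrite mulr_sumr.
  under eq_bigr do rewrite (proj2 (HP x _)) mulr1.
  by rewrite -mulr_sumr (proj2 (Hp x)) mulr1.
have g1 : 1 - g != 0 by rewrite gt_eqF // subr_gt0 (g_lt1 Hg).
have : (1 - g) * S = (1 - g) * 1.
  rewrite mulr1 mulrBl mul1r {1}E.
ring.
by move/(mulfI g1).
Qed.
Lemma occ_PV p (V : X -> R) : is_policy p ->
  \sum_x \sum_a occ_state P g nu0 p x * p x a * (g * \sum_y P x a y * V y) =
  \sum_y occ_state P g nu0 p y * V y - (1 - g) * \sum_y nu0 y * V y.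
Proof.
move=> Hp.
have E1 : \sum_y occ_state P g nu0 p y * V y = \sum_y ((1-g) * (nu0 y * V y) +
    g * (\sum_x \sum_a occ_state P g nu0 p x * p x a * P x a y) * V y).
  apply: eq_bigr => y _; rewrite occ_flow //; ring.
rewrite E1 big_split /= -mulr_sumr addrC addrK.
transitivity (\sum_x \sum_a \sum_y g * (occ_state P g nu0 p x * p x a * P x a y) * V y).
  apply: eq_bigr => x _; apply: eq_bigr => a _.
  rewrite !mulr_sumr; apply: eq_bigr => y _; ring.
symmetry.
transitivity (\sum_y \sum_x \sum_a g * (occ_state P g nu0 p x * p x a * P x a y) * V y).
  apply: eq_bigr => y _; rewrite mulr_sumr mulr_suml; apply: eq_bigr => x _.
  by rewrite mulr_sumr mulr_suml.
rewrite exchange_big; apply: eq_bigr => x _; exact: exchange_big.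
Qed.

Lemma occ_diff p p' : is_policy p -> is_policy p' ->
  \sum_x \sum_a `|occ_state P g nu0 p' x * p' x a - occ_state P g nu0 p x * p x a|
  <= (1 - g)^-1 * \sum_x occ_state P g nu0 p x * \sum_a `|p' x a - p x a|.
Proof.
move=> Hp Hp'.
set nu := occ_state P g nu0 p; set nu' := occ_state P g nu0 p'.
set M := \sum_x \sum_a _.
set W := \sum_x _.
have g0 := g_ge0 Hg; have g1 := g_lt1 Hg.
have Hd : \sum_y `|nu' y - nu y| <= g * M.
  apply: (@le_trans _ _ (\sum_y g * \sum_x \sum_a `|nu' x * p' x a - nu x * p x a| * P x a y)).
    apply: ler_sum => y _.
    rewrite /nu /nu' (occ_flow HP Hg Hnu Hp' y) (occ_flow HP Hg Hnu Hp y).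
    rewrite opprD addrACA subrr add0r -mulrBr normrM ger0_norm //; apply: ler_wpM2l => //.
    rewrite -sumrB; apply: le_trans (ler_norm_sum _ _ _) _; apply: ler_sum => x _.
    rewrite -sumrB; apply: le_trans (ler_norm_sum _ _ _) _; apply: ler_sum => a _.
    rewrite -mulrBl normrM (ger0_norm (proj1 (HP x a) y)) //.
  rewrite -mulr_sumr /M; apply: ler_wpM2l => //.
  rewrite exchange_big; apply: ler_sum => x _; rewrite exchange_big; apply: ler_sum => a _.
  by rewrite -mulr_sumr (proj2 (HP x a)) mulr1.
have HM : M <= \sum_y `|nu' y - nu y| + W.
  rewrite /W -big_split /=; apply: ler_sum => x _.
  have -> : `|nu' x - nu x| = \sum_a `|nu' x - nu x| * p' x a.
    by rewrite -mulr_sumr (proj2 (Hp' x)) mulr1.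
  rewrite mulr_sumr -big_split; apply: ler_sum => a _ /=.
  have -> : nu' x * p' x a - nu x * p x a = (nu' x - nu x) * p' x a + nu x * (p' x a - p x a) by ring.
  apply: le_trans (ler_normD _ _) _.
  have hnu : 0 <= nu x by exact: occ_ge0 HP Hg Hnu Hp x.
  by rewrite (normrM (nu' x - nu x)) (normrM (nu x)) (ger0_norm (proj1 (Hp' x) a)) (ger0_norm hnu).
have H1g : 0 < 1 - g by rewrite subr_gt0.
rewrite ler_pdivlMl //.
have : M <= g * M + W by apply: le_trans HM _; rewrite lerD2r.
move=> h; rewrite mulrBl mul1r; lra.
Qed.

Lemma occ_diffQ p p' (Q : X -> A -> R) (Hh : R) : is_policy p -> is_policy p' ->
  (forall x a, 0 <= Q x a <= Hh) ->
  \sum_x \sum_a occ_state P g nu0 p' x * p' x a * Q x a -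
  \sum_x \sum_a occ_state P g nu0 p x * p x a * Q x a
  <= Hh / 2 * \sum_x \sum_a `|occ_state P g nu0 p' x * p' x a - occ_state P g nu0 p x * p x a|.
Proof.
move=> Hp Hp' HQ.
set nu := occ_state P g nu0 p; set nu' := occ_state P g nu0 p'.
have S1 q : is_policy q -> \sum_x \sum_a occ_state P g nu0 q x * q x a = 1.
  move=> Hq; rewrite -(occ_sum1 Hq); apply: eq_bigr => x _.
  by rewrite -mulr_sumr (proj2 (Hq x)) mulr1.
have E : \sum_x \sum_a nu' x * p' x a * Q x a - \sum_x \sum_a nu x * p x a * Q x a =
   \sum_x \sum_a (nu' x * p' x a - nu x * p x a) * (Q x a - Hh / 2).
  transitivity (\sum_x \sum_a (nu' x * p' x a - nu x * p x a) * (Q x a - Hh / 2) +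
     Hh / 2 * (\sum_x \sum_a nu' x * p' x a - \sum_x \sum_a nu x * p x a)); last first.
    by rewrite /nu /nu' !S1 // subrr mulr0 addr0.
  rewrite -!sumrB mulr_sumr -big_split /=; apply: eq_bigr => x _.
  rewrite -!sumrB mulr_sumr -big_split /=; apply: eq_bigr => a _; ring.
rewrite E mulr_sumr; apply: ler_sum => x _; rewrite mulr_sumr; apply: ler_sum => a _.
apply: le_trans (ler_norm _) _; rewrite normrM mulrC; apply: ler_wpM2r => //.
have [h1 h2] := andP (HQ x a).
rewrite ler_norml; apply/andP; split; lra.
Qed.
End Occ2.

Lemma absw (R : realType) (y l c : R) : 0 <= y <= c -> 0 <= l <= c ->
  `|expR (y - l) - 1| <= l + expR (y - l) * (c - l).
Proof.
move=> /andP[y0 yc] /andP[l0 lc].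
have w0 := expR_gt0 (y - l).
have h1 := expR_ge1Dx (y - l).
have h2 := expR_ge1Dx (l - y).
have h3 : expR (y - l) * expR (l - y) = 1 by rewrite -expRD subrKA subrr expR0.
set w := expR (y - l) in w0 h1 h3 *; set w' := expR (l - y) in h2 h3.
have h2' : w * (1 + (l - y)) <= 1 by rewrite -[X in _ <= X]h3; apply: ler_wpM2l; [exact: ltW | exact: h2].
rewrite ler_norml; apply/andP; split; nra.
Qed.

Section Step.
Variables (R : realType) (A : finType) (p q p' : A -> R) (eta h V : R).
Hypotheses (Hp : is_distr p) (Heta : 0 < eta) (Hq : forall a, 0 <= q a <= h).
Hypotheses (HV : V = eta^-1 * ln (\sum_a p a * expR (eta * q a)))
  (Hp' : forall a, p' a = p a * expR (eta * (q a - V))).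

Let Z := \sum_a p a * expR (eta * q a).

Lemma Z_ge1 : 1 <= Z.
Proof.
rewrite -(proj2 Hp) /Z; apply: ler_sum => a _; apply: ler_peMr; first exact: (proj1 Hp a).
apply: le_trans (expR_ge1Dx _); rewrite lerDl mulr_ge0 ?(ltW Heta) //; by case/andP: (Hq a).
Qed.

Lemma Z_le : Z <= expR (eta * h).
Proof.
rewrite -[leRHS]mul1r -(proj2 Hp) mulr_suml; apply: ler_sum => a _.
apply: ler_wpM2l; first exact: (proj1 Hp a).
rewrite ler_expR ler_wpM2l ?(ltW Heta) //; by case/andP: (Hq a).
Qed.

Lemma Z_gt0 : 0 < Z.
Proof. exact: lt_le_trans ltr01 Z_ge1. Qed.

Lemma V_ge0 : 0 <= V.
Proof. rewrite HV mulr_ge0 ?invr_ge0 ?(ltW Heta) // ln_ge0 //; exact: Z_ge1. Qed.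

Lemma V_le : V <= h.
Proof.
rewrite HV ler_pdivrMl // -[X in _ <= X](expRK (eta * h)).
rewrite ler_ln ?posrE ?expR_gt0 ?Z_gt0 //; exact: Z_le.
Qed.

Lemma eV : expR (eta * V) = Z.
Proof. by rewrite HV mulrA divff ?gt_eqF // mul1r lnK // posrE Z_gt0. Qed.

Lemma p'E a : p' a = p a * expR (eta * q a) / Z.
Proof. by rewrite Hp' mulrBr expRB eV mulrA. Qed.

Lemma p'_distr : is_distr p'.
Proof.
split.
  move=> a; rewrite Hp' mulr_ge0 ?(proj1 Hp a) ?expR_ge0 //.
under eq_bigr do rewrite p'E.
by rewrite -mulr_suml divff // gt_eqF // Z_gt0.
Qed.

Lemma V_le_mean : V <= \sum_a p' a * q a.
Proof.
have Z0 := Z_gt0.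
have key : 0 <= \sum_a p a * expR (eta * q a) * (eta * q a - ln Z).
  apply: (@le_trans _ _ (\sum_a p a * (expR (eta * q a) - Z))).
    under eq_bigr do rewrite mulrBr. rewrite sumrB -mulr_suml (proj2 Hp) mul1r /Z subrr //.
  apply: ler_sum => a _; rewrite -mulrA; apply: ler_wpM2l; first exact: (proj1 Hp a).
  set u := eta * q a - ln Z.
  have e : expR (eta * q a) = Z * expR u by rewrite /u expRB lnK ?posrE // mulrCA divff ?mulr1 // gt_eqF.
  rewrite e; have := expR_ge1Dx (- u); have eu := expR_gt0 u.
  have h3 : expR u * expR (- u) = 1 by rewrite -expRD subrr expR0.
  move=> hx; have h' : expR u * (1 - u) <= 1 by rewrite -[X in _ <= X]h3; apply: ler_wpM2l; [exact: ltW | lra].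
  nra.
have E : \sum_a p' a * q a = (eta * Z)^-1 * \sum_a p a * expR (eta * q a) * (eta * q a).
  rewrite mulr_sumr; apply: eq_bigr => a _; rewrite p'E; field.
  by rewrite !gt_eqF.
rewrite E HV -/Z.
have : ln Z * Z <= \sum_a p a * expR (eta * q a) * (eta * q a).
  move: key; rewrite [X in 0 <= X](_ : _ = \sum_a p a * expR (eta * q a) * (eta * q a) - ln Z * Z).
    by rewrite subr_ge0.
  rewrite /Z mulr_sumr -sumrB; apply: eq_bigr => a _; ring.
move=> hx; rewrite invfM -mulrA ler_pM2l ?invr_gt0 //.
rewrite ler_pdivlMl //; by rewrite mulrC.
Qed.

Lemma tv : \sum_a `|p' a - p a| <= eta * h.
Proof.
have Z0 := Z_gt0.
set l := ln Z.
have l0 : 0 <= l <= eta * h.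
  apply/andP; split; first by rewrite ln_ge0 // Z_ge1.
  rewrite -[X in _ <= X](expRK (eta * h)) ler_ln ?posrE ?expR_gt0 // Z_le //.
apply: (@le_trans _ _ (\sum_a p a * (l + expR (eta * q a - l) * (eta * h - l)))).
  apply: ler_sum => a _.
  have -> : p' a - p a = p a * (expR (eta * q a - l) - 1).
    rewrite p'E /l expRB lnK ?posrE //; field; by rewrite gt_eqF.
  rewrite normrM ger0_norm ?(proj1 Hp a) //; apply: ler_wpM2l; first exact: (proj1 Hp a).
  apply: absw => //; case/andP: (Hq a) => q0 qh.
  by rewrite mulr_ge0 ?(ltW Heta) //= ler_wpM2l ?(ltW Heta).
under eq_bigr do rewrite mulrDr.
rewrite big_split /= -mulr_suml (proj2 Hp) mul1r.
have -> : \sum_a p a * (expR (eta * q a - l) * (eta * h - l)) = \sum_a p' a * (eta * h - l).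
  apply: eq_bigr => a _; rewrite p'E /l expRB lnK ?posrE //; field; by rewrite gt_eqF.
rewrite -mulr_suml (proj2 p'_distr) mul1r; lra.
Qed.

Lemma p'_pos a : 0 < p a -> 0 < p' a.
Proof. by move=> pa; rewrite Hp' mulr_gt0 ?expR_gt0. Qed.

Lemma ln_p' a : 0 < p a -> ln (p' a) = ln (p a) + eta * (q a - V).
Proof. by move=> pa; rewrite Hp' lnM ?posrE ?expR_gt0 // expRK. Qed.

End Step.

Lemma gibbs (R : realType) (A : finType) (p q : A -> R) : is_distr p -> is_distr q ->
  (forall a, 0 < p a -> 0 < q a) ->
  0 <= \sum_(a | 0 < p a) p a * ln (p a / q a).
Proof.
move=> Hp Hq Hpq.
apply: (@le_trans _ _ (\sum_(a | 0 < p a) (p a - q a))).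
  rewrite sumrB subr_ge0.
  have -> : \sum_(a | 0 < p a) p a = 1.
    rewrite -(proj2 Hp) [RHS](bigID (fun a => 0 < p a)) /= [X in _ = _ + X]big1 ?addr0 //.
    move=> a pa; apply/eqP; rewrite eq_le (proj1 Hp a) andbT; by rewrite leNgt.
  rewrite -(proj2 Hq) [X in _ <= X](bigID (fun a => 0 < p a)) /= lerDl.
  by apply: sumr_ge0 => a _; exact: (proj1 Hq a).
apply: ler_sum => a pa.
have qa := Hpq a pa.
have : ln (q a / p a) <= q a / p a - 1.
  have e : q a / p a = 1 + (q a / p a - 1) by rewrite addrC subrK.
  rewrite {1}e; apply: le_ln1Dx.
  have : 0 < q a / p a by rewrite divr_gt0.
  lra.
rewrite -[p a / q a]invf_div lnV ?posrE ?divr_gt0 //.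
move=> h2; rewrite mulrN.
have : p a * ln (q a / p a) <= p a * (q a / p a - 1) by apply: ler_wpM2l => //; exact: ltW.
rewrite mulrBr mulr1 mulrCA divff ?mulr1 ?gt_eqF //; lra.
Qed.

Section IP.
Variables (R : realType) (X A : finType).
Variables (P : X -> A -> X -> R) (g : R) (nu0 : X -> R).
Hypotheses (HP : is_kernel P) (Hg : 0 < g < 1) (Hnu : is_distr nu0).

Definition ip (p f : X -> A -> R) :=
  \sum_x \sum_a occ_state P g nu0 p x * p x a * f x a.
Definition iv (p : X -> A -> R) (W : X -> R) :=
  \sum_x occ_state P g nu0 p x * W x.

Lemma ip_le p f1 f2 : is_policy p -> (forall x a, f1 x a <= f2 x a) -> ip p f1 <= ip p f2.
Proof.
move=> Hp h; apply: ler_sum => x _; apply: ler_sum => a _; apply: ler_wpM2l => //.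
apply: mulr_ge0; [exact: occ_ge0 | exact: (proj1 (Hp x) a)].
Qed.

Lemma ip_ge0 p f : is_policy p -> (forall x a, 0 <= f x a) -> 0 <= ip p f.
Proof.
move=> Hp h; apply: sumr_ge0 => x _; apply: sumr_ge0 => a _.
apply: mulr_ge0 => //; apply: mulr_ge0; [exact: occ_ge0 | exact: (proj1 (Hp x) a)].
Qed.

Lemma ipD p f1 f2 : ip p (fun x a => f1 x a + f2 x a) = ip p f1 + ip p f2.
Proof.
rewrite /ip -big_split; apply: eq_bigr => x _; rewrite -big_split; apply: eq_bigr => a _ /=.
by rewrite mulrDr.
Qed.

Lemma ipZ p c f : ip p (fun x a => c * f x a) = c * ip p f.
Proof.
rewrite /ip mulr_sumr; apply: eq_bigr => x _; rewrite mulr_sumr; apply: eq_bigr => a _.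
by rewrite mulrCA.
Qed.

Lemma ip_PV p (W : X -> R) : is_policy p ->
  ip p (fun x a => g * \sum_y P x a y * W y) = iv p W - (1 - g) * \sum_y nu0 y * W y.
Proof.
move=> Hp; rewrite /ip /iv -(occ_PV HP Hg Hnu W Hp); apply: eq_bigr => x _.
by apply: eq_bigr => a _.
Qed.

Lemma ip_iv p f : ip p f = \sum_x occ_state P g nu0 p x * \sum_a p x a * f x a.
Proof.
apply: eq_bigr => x _; rewrite mulr_sumr; apply: eq_bigr => a _; by rewrite mulrA.
Qed.

Lemma iv_le p (W : X -> R) c : is_policy p -> (forall x, W x <= c) -> iv p W <= c.
Proof.
move=> Hp h; rewrite -[leRHS]mul1r -(occ_sum1 HP Hg Hnu Hp) mulr_suml.
apply: ler_sum => x _; apply: ler_wpM2l; [exact: occ_ge0 | exact: h].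
Qed.

Lemma ip_diff p p' Q h eta : is_policy p -> is_policy p' -> (forall x a, 0 <= Q x a <= h) ->
  (forall x, \sum_a `|p' x a - p x a| <= eta * h) -> 0 <= h -> g < 1 ->
  ip p' Q - ip p Q <= h / 2 * ((1 - g)^-1 * (eta * h)).
Proof.
move=> Hp Hp' HQ Htv h0 g1.
apply: le_trans (occ_diffQ HP Hg Hnu Hp Hp' HQ) _.
apply: ler_wpM2l; first by rewrite divr_ge0.
apply: le_trans (occ_diff HP Hg Hnu Hp Hp') _.
apply: ler_wpM2l; first by rewrite invr_ge0 subr_ge0 ltW.
rewrite -[leRHS]mul1r -(occ_sum1 HP Hg Hnu Hp) mulr_suml.
apply: ler_sum => x _; apply: ler_wpM2l => //; exact: occ_ge0.
Qed.

End IP.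

End AllHelpers.


Theorem lemma2 (R : realType) (X A : finType)
  (r : X -> A -> R) (P : X -> A -> X -> R) (g : R) (nu0 : X -> R)
  (pis : X -> A -> R) (eta : R) (K : nat)
  (pi : nat -> X -> A -> R) (Q : nat -> X -> A -> R) (V : nat -> X -> R)
  (CB : nat -> X -> A -> R) (Ph : nat -> X -> A -> X -> R) :
  (forall x a, 0 <= r x a <= 1) ->
  is_kernel P ->
  0 < g < 1 ->
  is_distr nu0 ->
  is_optimal P g r pis ->
  0 < eta ->
  is_policy (pi 0%N) ->
  (forall x a, Q 1%N x a = 0) ->
  (forall k, (0 < k)%N -> forall x,
     V k x = eta^-1 * ln (\sum_(a : A) pi k.-1 x a * expR (eta * Q k x a))) ->
  (forall k, (0 < k)%N -> forall x a,
     pi k x a = pi k.-1 x a * expR (eta * (Q k x a - V k x))) ->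
  (forall k, (0 < k)%N -> forall x a,
     Q k.+1 x a = clipH (1 - g)^-1
                    (r x a + CB k x a + g * applyP (Ph k) (V k) x a)) ->
  (forall k, (0 < k <= K)%N -> forall x a, 0 <= CB k x a) ->
  (forall k, (0 < k <= K)%N -> forall x a,
     `| g * \sum_(x' : X) (P x a x' - Ph k x a x') * V k x' | <= CB k x a) ->
  ((\sum_(1 <= k < K.+1)
      (inner (occ P g nu0 pis) r - inner (occ P g nu0 (pi k)) r))%:E
   <= (2 * \sum_(1 <= k < K.+1) inner (occ P g nu0 (pi k)) (CB k)
       + 2 * (1 - g)^-1
       + eta * ((1 - g)^-1) ^+ 3 * K%:R / 2)%:E
      + (eta^-1)%:E * cond_rel_ent P g nu0 pis (pi 0%N))%E.
Proof.
move=> Hr HP Hg Hnu [Hpis _] Heta Hpi0 HQ1 HV Hpi HQ HCB Hval.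
have g0 := g_ge0 Hg; have g1 := g_lt1 Hg.
have g1' : 0 < 1 - g by rewrite subr_gt0.
set H := (1 - g)^-1.
have H0 : 0 < H by rewrite invr_gt0.
have eH : 1 + g * H = H by rewrite /H; field; rewrite gt_eqF.
have H1 : 1 <= H by rewrite -eH lerDl mulr_ge0 // ltW.
have clip_b v : 0 <= clipH H v <= H.
  apply/andP; split; first by rewrite /clipH le_max lexx orbT.
  by rewrite /clipH ge_max ge_min lexx orbT ltW.
have HQb k : (0 < k)%N -> forall x a, 0 <= Q k x a <= H.
  case: k => // -[|k] _ x a; first by rewrite HQ1 lexx ltW.
  by rewrite HQ.
have pol k : is_policy (pi k).
  elim: k => [|k IH] // x.
  exact: (p'_distr (IH x) Heta (HQb k.+1 isT x) (HV k.+1 isT x) (Hpi k.+1 isT x)).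
have pos k x a : 0 < pi 0%N x a -> 0 < pi k x a.
  move=> h; elim: k => // k IH; exact: (p'_pos (Hpi k.+1 isT x) IH).
have HVb k : (0 < k)%N -> forall x, 0 <= V k x <= H.
  case: k => // k _ x; apply/andP; split.
    exact: (V_ge0 (pol k x) Heta (HQb k.+1 isT x) (HV k.+1 isT x)).
  exact: (V_le (pol k x) Heta (HQb k.+1 isT x) (HV k.+1 isT x)).
have V1 x : V 1%N x = 0.
  rewrite HV //; under eq_bigr do rewrite HQ1 mulr0 expR0 mulr1.
  by rewrite (proj2 (Hpi0 x)) ln1 mulr0.
have pi1 x a : pi 1%N x a = pi 0%N x a by rewrite Hpi // HQ1 V1 subrr mulr0 expR0 mulr1.
set PV := fun k x a => g * \sum_y P x a y * V k y.
have sand k x a : (0 < k <= K)%N ->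
    r x a + PV k x a <= Q k.+1 x a <= r x a + 2 * CB k x a + PV k x a.
  move=> hk; have k0 : (0 < k)%N by case/andP: hk.
  rewrite HQ // /clipH /applyP /PV.
  set w := \sum_y Ph k x a y * V k y.
  set s := \sum_y P x a y * V k y.
  have hv := Hval k hk x a.
  have E : g * \sum_y (P x a y - Ph k x a y) * V k y = g * s - g * w.
    rewrite -mulrBr -sumrB; congr (_ * _); apply: eq_bigr => y _; ring.
  rewrite E ler_norml in hv; case/andP: hv => h1 h2.
  have s0 : 0 <= s.
    apply: sumr_ge0 => y _; apply: mulr_ge0; [exact: (proj1 (HP x a) y) | by case/andP: (HVb k k0 y)].
  have sH : s <= H.
    rewrite -[leRHS]mul1r -(proj2 (HP x a)) mulr_suml; apply: ler_sum => y _.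
    apply: ler_wpM2l; [exact: (proj1 (HP x a) y) | by case/andP: (HVb k k0 y)].
  have [r0 r1] := andP (Hr x a).
  have gs : g * s <= g * H by apply: ler_wpM2l.
  have gs0 : 0 <= g * s by apply: mulr_ge0.
  set v := r x a + CB k x a + g * w.
  have uv : r x a + g * s <= v by rewrite /v; lra.
  have vu : v <= r x a + 2 * CB k x a + g * s by rewrite /v; lra.
  have uH : r x a + g * s <= H by lra.
  have m0 : 0 <= Num.min v H by rewrite le_min; apply/andP; split; lra.
  rewrite max_l //; apply/andP; split.
    by rewrite le_min uH andbT.
  by rewrite ge_min vu.
have ivPV p k : is_policy p -> ip P g nu0 p (PV k) =
    iv P g nu0 p (V k) - (1 - g) * \sum_y nu0 y * V k y.
  move=> Hp; exact: (ip_PV HP Hg Hnu (V k) Hp).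
have reg k : (0 < k <= K)%N ->
    ip P g nu0 pis r - ip P g nu0 (pi k) r <= 2 * ip P g nu0 (pi k) (CB k) +
    (ip P g nu0 pis (Q k.+1) - iv P g nu0 pis (V k)) -
    (ip P g nu0 (pi k) (Q k.+1) - iv P g nu0 (pi k) (V k)).
  move=> hk.
  have L1 : ip P g nu0 pis (fun x a => r x a + PV k x a) <= ip P g nu0 pis (Q k.+1).
    apply: (ip_le HP Hg Hnu Hpis) => x a; by case/andP: (sand k x a hk).
  have L2 : ip P g nu0 (pi k) (Q k.+1) <=
      ip P g nu0 (pi k) (fun x a => r x a + 2 * CB k x a + PV k x a).
    apply: (ip_le HP Hg Hnu (pol k)) => x a; by case/andP: (sand k x a hk).
  rewrite (ipD P g nu0 pis r (PV k)) ivPV // in L1.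
  rewrite (ipD P g nu0 (pi k) (fun x a => r x a + 2 * CB k x a) (PV k)) ivPV // in L2.
  rewrite (ipD P g nu0 (pi k) r (fun x a => 2 * CB k x a)) (ipZ P g nu0 (pi k) 2 (CB k)) in L2.
  lra.
set c := H / 2 * (H * (eta * H)).
have tvb n x : \sum_a `|pi n.+1 x a - pi n x a| <= eta * H.
  exact: (tv (pol n x) Heta (HQb n.+1 isT x) (HV n.+1 isT x) (Hpi n.+1 isT x)).
have Tb n : \sum_(1 <= k < n.+1) (ip P g nu0 (pi k) (Q k) - ip P g nu0 (pi k) (Q k.+1))
    + ip P g nu0 (pi n) (Q n.+1) <= n%:R * c.
  elim: n => [|n IH].
    rewrite big_geq // add0r mul0r le_eqVlt; apply/orP; left; apply/eqP.
    rewrite /ip; apply: big1 => x _; apply: big1 => a _; by rewrite HQ1 mulr0.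
  rewrite big_nat_recr //=.
  have D := ip_diff HP Hg Hnu (pol n) (pol n.+1) (HQb n.+1 isT) (tvb n) (ltW H0) g1.
  rewrite -/H -/c in D.
  rewrite -natr1; lra.
have Tsum : \sum_(1 <= k < K.+1) (ip P g nu0 (pi k) (Q k) - ip P g nu0 (pi k) (Q k.+1))
    <= K%:R * c.
  have := Tb K; have := ip_ge0 HP Hg Hnu (pol K) (fun x a => proj1 (andP (HQb K.+1 isT x a))).
  lra.
have tsum : \sum_(1 <= k < K.+1) (iv P g nu0 pis (V k.+1) - iv P g nu0 pis (V k)) <= H.
  rewrite (telescope_sumr (fun k => iv P g nu0 pis (V k))) //.
  have -> : iv P g nu0 pis (V 1%N) = 0 by rewrite /iv; apply: big1 => x _; rewrite V1 mulr0.
  rewrite subr0; apply: (iv_le HP Hg Hnu Hpis) => x; by case/andP: (HVb K.+1 isT x).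
have meanb k : (0 < k)%N -> iv P g nu0 (pi k) (V k) <= ip P g nu0 (pi k) (Q k).
  case: k => // k _; rewrite ip_iv; apply: ler_sum => x _; apply: ler_wpM2l.
    exact: (occ_ge0 HP Hg Hnu (pol k.+1)).
  exact: (V_le_mean (pol k x) Heta (HQb k.+1 isT x) (HV k.+1 isT x) (Hpi k.+1 isT x)).
have main1 : \sum_(1 <= k < K.+1) (ip P g nu0 pis r - ip P g nu0 (pi k) r) <=
    2 * \sum_(1 <= k < K.+1) ip P g nu0 (pi k) (CB k)
    + \sum_(1 <= k < K.+1) (ip P g nu0 pis (Q k.+1) - iv P g nu0 pis (V k.+1))
    + H + K%:R * c.
  apply: (@le_trans _ _ (\sum_(1 <= k < K.+1) (2 * ip P g nu0 (pi k) (CB k)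
    + (ip P g nu0 pis (Q k.+1) - iv P g nu0 pis (V k.+1))
    + (iv P g nu0 pis (V k.+1) - iv P g nu0 pis (V k))
    + (ip P g nu0 (pi k) (Q k) - ip P g nu0 (pi k) (Q k.+1))))).
    apply: ler_sum_nat => k hk.
    have hk' : (0 < k <= K)%N by case/andP: hk => h1 h2; rewrite h1 -ltnS h2.
    have := reg k hk'; have := meanb k (proj1 (andP hk')); lra.
  rewrite big_split /= big_split /= big_split /= -mulr_sumr; lra.
set nus := occ_state P g nu0 pis.
set KLf := fun x => \sum_(a | 0 < pis x a) pis x a * ln (pis x a / pi 0%N x a).
have Sall x (f : A -> R) : \sum_(a | 0 < pis x a) pis x a * f a = \sum_a pis x a * f a.
  rewrite big_mkcond; apply: eq_bigr => a _; case: ifP => // h.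
  have -> : pis x a = 0 by apply/eqP; rewrite eq_le (proj1 (Hpis x) a) andbT leNgt h.
  by rewrite mul0r.
have Sx x : (forall a, 0 < pis x a -> 0 < pi 0%N x a) ->
    \sum_(1 <= k < K.+1) (\sum_a pis x a * Q k.+1 x a - V k.+1 x) <= eta^-1 * KLf x.
  move=> Hx.
  have E1 k : \sum_a pis x a * Q k.+1 x a - V k.+1 x =
      eta^-1 * \sum_(a | 0 < pis x a) pis x a * (ln (pi k.+1 x a) - ln (pi k x a)).
    rewrite [in RHS](eq_bigr (fun a => pis x a * (eta * (Q k.+1 x a - V k.+1 x)))); last first.
      move=> a ha; rewrite (ln_p' (Hpi k.+1 isT x) (pos k x a (Hx a ha))).
      by rewrite addrAC subrr add0r.
    rewrite Sall.
    rewrite [in RHS](_ : \sum_a pis x a * (eta * (Q k.+1 x a - V k.+1 x)) =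
       eta * (\sum_a pis x a * Q k.+1 x a - V k.+1 x)).
      by rewrite mulKf // gt_eqF.
    rewrite [in RHS](_ : V k.+1 x = (\sum_a pis x a) * V k.+1 x); last first.
      by rewrite (proj2 (Hpis x)) mul1r.
    rewrite mulr_suml -sumrB mulr_sumr; apply: eq_bigr => a _; ring.
  under eq_bigr do rewrite E1.
  rewrite -mulr_sumr; apply: ler_wpM2l; first by rewrite invr_ge0 ltW.
  rewrite exchange_big /=.
  under eq_bigr => a _ do rewrite -mulr_sumr (telescope_sumr (fun k => ln (pi k x a))) // pi1.
  have G := gibbs (Hpis x) (pol K.+1 x) (fun a ha => pos K.+1 x a (Hx a ha)).
  suff -> : \sum_(a | 0 < pis x a) pis x a * (ln (pi K.+1 x a) - ln (pi 0%N x a)) =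
     KLf x - \sum_(a | 0 < pis x a) pis x a * ln (pis x a / pi K.+1 x a) by lra.
  rewrite /KLf -sumrB; apply: eq_bigr => a ha.
  rewrite !ln_div ?posrE ?(pos K.+1 x a (Hx a ha)) ?(Hx a ha) //; ring.
have nus0 x : 0 <= nus x by exact: (occ_ge0 HP Hg Hnu Hpis).
have Aterm : (forall x, 0 < nus x -> forall a, 0 < pis x a -> 0 < pi 0%N x a) ->
    \sum_(1 <= k < K.+1) (ip P g nu0 pis (Q k.+1) - iv P g nu0 pis (V k.+1)) <=
    eta^-1 * \sum_(x | 0 < nus x) nus x * KLf x.
  move=> Hac.
  have -> : \sum_(1 <= k < K.+1) (ip P g nu0 pis (Q k.+1) - iv P g nu0 pis (V k.+1)) =
      \sum_x nus x * \sum_(1 <= k < K.+1) (\sum_a pis x a * Q k.+1 x a - V k.+1 x).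
    transitivity (\sum_(1 <= k < K.+1) \sum_x nus x * (\sum_a pis x a * Q k.+1 x a - V k.+1 x)).
      apply: eq_bigr => k _; rewrite ip_iv /iv -sumrB; apply: eq_bigr => x _; by rewrite mulrBr.
    rewrite exchange_big; apply: eq_bigr => x _; by rewrite mulr_sumr.
  rewrite mulr_sumr [X in _ <= X]big_mkcond /=; apply: ler_sum => x _.
  case: ifP => h.
    rewrite mulrCA; apply: ler_wpM2l => //; exact: Sx (Hac x h).
  have -> : nus x = 0 by apply/eqP; rewrite eq_le nus0 andbT leNgt h.
  by rewrite mul0r.
have Eip p f : inner (occ P g nu0 p) f = ip P g nu0 p f by [].
under eq_bigr do rewrite !Eip.
under [X in (_ <= (_ * X + _ + _)%:E + _)%E]eq_bigr do rewrite Eip.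
have KLge0 x : (0 <= KL (pis x) (pi 0%N x))%E.
  rewrite /KL; case: ifP => h; last exact: leey.
  rewrite lee_fin; apply: gibbs (Hpis x) (Hpi0 x) _.
  move=> a ha; move/forallP: h => /(_ a) /implyP; exact.
have ne_ninf (e : \bar R) : (0 <= e)%E -> e != -oo%E by case: e.
case: (boolP [forall x, (0 < nus x) ==> [forall a, (0 < pis x a) ==> (0 < pi 0%N x a)]]) => hb.
  have Hac x : 0 < nus x -> forall a, 0 < pis x a -> 0 < pi 0%N x a.
    move=> hx a ha; move/forallP: hb => /(_ x) /implyP /(_ hx) /forallP /(_ a) /implyP.
    exact.
  have cre : cond_rel_ent P g nu0 pis (pi 0%N) = (\sum_(x | 0 < nus x) nus x * KLf x)%:E.
    rewrite /cond_rel_ent -sumEFin; apply: eq_bigr => x hx; rewrite /KL.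
    have -> : [forall a, (0 < pis x a) ==> (0 < pi 0%N x a)] = true.
      apply/forallP => a; apply/implyP; exact: Hac x hx a.
    by rewrite EFinM.
  rewrite cre -EFinM -EFinD lee_fin.
  have := Aterm Hac.
  have -> : eta * H ^+ 3 * K%:R / 2 = K%:R * c by rewrite /c; ring.
  lra.
move/forallPn: hb => [x0]; rewrite negb_imply => /andP[hx0 hn].
have cre : cond_rel_ent P g nu0 pis (pi 0%N) = +oo%E.
  rewrite /cond_rel_ent (bigD1 x0) //= {1}/KL (negbTE hn) gt0_muley ?lte_fin //.
  apply: addye; apply: ne_ninf; apply: sume_ge0 => x _.
  apply: mule_ge0 => //; rewrite lee_fin; exact: nus0.
rewrite cre gt0_muley ?lte_fin ?invr_gt0 // addey //; exact: leey.
Qed.
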